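(* Let $X$ be a unital semiring and $\nu:X\to X$, $\nu(x)=x+x$, and $\nu X=\{a\in X: a=a+a\}$. The following are equivalent: (1) $2=4$ in $X$; (2) $\nu$ is a semiring homomorphism; (3) $\nu\circ\nu=\nu$; (4) the image of $\nu$ equals $\nu X$. If these hold, then $\nu X$ is a unital idempotent semiring with multiplicative unit $\nu(1)$, and the corestriction $X\to\nu X$ of $\nu$ is a unital semiring homomorphism.
   Context: A semiring $(X,+,0,\cdot)$: $(X,+,0)$ commutative monoid, $(X,\cdot)$ semigroup, distributivity, $0$ absorbing; unital: has a multiplicative unit $1$. A natural number $n$ is identified with $1+\dots+1$ ($n$ times) in $X$. A semiring homomorphism preserves addition, zero and multiplication; a unital one also preserves $1$. *)

(* Defs.v *)
From HB Require Import structures.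
From mathcomp Require Import all_boot all_algebra.
Set Implicit Arguments. Unset Strict Implicit. Unset Printing Implicit Defensive.
Import GRing.Theory.
Local Open Scope ring_scope.

(* A unital semiring (1 = 0 allowed) is a MathComp pzSemiRingType:
   commutative additive monoid, associative multiplication with unit 1,
   distributivity, 0 absorbing. *)

Definition nu (X : pzSemiRingType) (x : X) : X := x + x.

Definition nuX (X : pzSemiRingType) (a : X) : Prop := a = a + a.

Definition semiring_hom (X Y : pzSemiRingType) (f : X -> Y) : Prop :=
  [/\ forall x y, f (x + y) = f x + f y, f 0 = 0
    & forall x y, f (x * y) = f x * f y].

(* The subset S of X, with the operations +, 0, * restricted from X, is a
   unital idempotent semiring with multiplicative unit e: S is closed under
   +, 0, *, addition on S is idempotent, e lies in S and is a two-sided unit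
   for S. (Associativity, commutativity, distributivity and absorption are
   inherited from X.) *)
Definition unital_idempotent_subsemiring (X : pzSemiRingType)
    (S : X -> Prop) (e : X) : Prop :=
  S 0 /\
  (forall a b, S a -> S b -> S (a + b)) /\
  (forall a b, S a -> S b -> S (a * b)) /\
  (forall a, S a -> a + a = a) /\
  S e /\
  (forall a, S a -> e * a = a /\ a * e = a).

Definition corestriction_unital_hom (X : pzSemiRingType)
    (f : X -> X) (S : X -> Prop) (e : X) : Prop :=
  [/\ forall x, S (f x), semiring_hom f & f 1 = e].

(* Main.v *)
Require Import Defs.
From mathcomp Require Import all_boot all_algebra.
Local Open Scope ring_scope.
Import GRing.Theory.

Lemma nuE (X : pzSemiRingType) (x : X) : nu x = 2%:R * x.
Proof. by rewrite /nu mulr_natl mulr2n. Qed.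

Lemma four (X : pzSemiRingType) : (4%:R : X) = 2%:R + 2%:R.
Proof. by rewrite -natrD. Qed.

Lemma nunu (X : pzSemiRingType) (x : X) : nu (nu x) = 4%:R * x.
Proof. by rewrite four /nu mulrDl !mulr_natl !mulr2n. Qed.

Theorem proposition5p1 (X : pzSemiRingType) :
  let P1 := (2%:R : X) = 4%:R in
  let P2 := semiring_hom (@nu X) in
  let P3 := forall x : X, nu (nu x) = nu x in
  let P4 := forall a : X, (exists x : X, a = nu x) <-> nuX a in
  [/\ P1 <-> P2, P1 <-> P3, P1 <-> P4
    & P1 -> unital_idempotent_subsemiring (@nuX X) (nu 1)
            /\ corestriction_unital_hom (@nu X) (@nuX X) (nu 1)].
Proof.
move=> P1 P2 P3 P4.
have e1 : P1 = ((2%:R : X) = 4%:R) by [].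
have e3 : P3 = (forall x : X, nu (nu x) = nu x) by [].
have h13 : P1 -> P3 by rewrite e1 e3 => H x; rewrite nunu nuE H.
have h31 : P3 -> P1 by rewrite e1 e3 => H; have := H 1; rewrite nunu nuE !mulr1 => ->.
have hadd : forall x y : X, nu (x + y) = nu x + nu y.
  by move=> x y; rewrite !nuE mulrDr.
have h0 : nu (0 : X) = 0 by rewrite nuE mulr0.
have hnuX' : forall a : X, nuX a -> nu a = a by move=> a Ha; rewrite /nu -Ha.
have hmul : forall x y : X, nu x * nu y = 4%:R * (x * y).
  by move=> x y; rewrite !nuE !mulr_natl mulrnAl mulrnAr -mulrnA.
rewrite /P1 /P2 /P3 /P4 in h13 h31 *.
rewrite /P1 /P2 /P3 /P4 in h13 h31 *.
split.
- split.
  + move=> H; split => // x y; by rewrite hmul nuE H.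
  + case=> _ _ Hm; have := Hm 1 1; rewrite hmul nuE !mulr1 => ->. done.
- by split.
- split.
  + move=> H a; split.
    * by case=> x ->; rewrite /nuX -/(nu (nu x)) h13.
    * by move=> Ha; exists a; rewrite hnuX'.
  + move=> H; have [/(_ (ex_intro _ 1 erefl)) + _] := H (nu 1).
    by rewrite /nuX nuE mulr1 -four => ->.
- move=> H; split.
  + split; first by rewrite /nuX addr0.
    split; first by move=> a b Ha Hb; rewrite /nuX addrACA -Ha -Hb.
    split; first by move=> a b Ha _; rewrite /nuX -mulrDl -Ha.
    split; first by move=> a Ha; rewrite -Ha.
    split; first by rewrite /nuX -/(nu (nu 1)) h13.
    move=> a Ha; rewrite !nuE mulr1; split; first by rewrite -nuE hnuX'.
    by rewrite mulr_natr mulr2n -Ha.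
  + split => //.
    * by move=> x; rewrite /nuX -/(nu (nu x)) h13.
    * split => // x y; by rewrite hmul nuE H.
Qed.
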